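(* Let $\vec a=(a_1,\dots,a_n),\vec b=(b_1,\dots,b_n)\in\mathbb{R}^n$ and $\delta\ge0$ with $\|\mathrm{push}_{\mathcal L_{\vec b}}(\vec a)-\vec b\|_\infty\le\delta$. Then $\min_{i\in[n]}|a_i-b_i|\le\delta$. In particular, if $\vec a\in\mathrm{Im}\,\mathcal G$ for a grid $\mathcal G$, then $\inf_{\vec g\in\mathrm{Grid}_{\mathcal G}}\|\vec b-\vec g\|_\infty\le\delta$.
   Context: $\mathcal L_{\vec b}$ is the line $\{\vec b+t\vec1:t\in\mathbb{R}\}$, $\vec1=(1,\dots,1)$. $\mathrm{push}_{\mathcal L}(\vec p)=\min\{\vec q\in\mathcal L:\vec q\ge\vec p\}$ in the coordinatewise order. A grid is $\mathcal G=\prod_i\mathcal G^i:\prod_i[k_i]\to\mathbb{R}^n$ with $\mathcal G^i:[k_i]\to\mathbb{R}$, and $\mathrm{Grid}_{\mathcal G}=\{\vec x\in\mathbb{R}^n:x_j\in\mathrm{Im}\,\mathcal G^j\text{ for some }j\}$. *)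

(* Defs.v *)
From HB Require Import structures.
From mathcomp Require Import all_boot all_order all_algebra.
From mathcomp Require Import boolp classical_sets reals.
Set Implicit Arguments. Unset Strict Implicit. Unset Printing Implicit Defensive.
Import Order.TTheory GRing.Theory Num.Theory.
Local Open Scope ring_scope.
Local Open Scope classical_set_scope.

Section Defs.
Variables (R : realType) (n : nat).

Definition line (b : 'I_n -> R) : set ('I_n -> R) :=
  [set q | exists t : R, q = (fun i => b i + t)].

Definition leV (p q : 'I_n -> R) : Prop := forall i, p i <= q i.

Definition is_push (L : set ('I_n -> R)) (p q : 'I_n -> R) : Prop :=
  [/\ L q, leV p q & forall q', L q' -> leV p q' -> leV q q'].

Definition linf (x : 'I_n -> R) : R := \big[Num.max/0]_(i < n) `|x i|.

Definition grid_image (k : 'I_n -> nat) (G : forall i : 'I_n, 'I_(k i) -> R)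
  : set ('I_n -> R) := [set x | forall i, exists j, x i = G i j].

Definition Grid (k : 'I_n -> nat) (G : forall i : 'I_n, 'I_(k i) -> R)
  : set ('I_n -> R) := [set x | exists i, exists j, x i = G i j].

End Defs.

(* Main.v *)
Require Import Defs.
From HB Require Import structures.
From mathcomp Require Import all_boot all_order all_algebra.
From mathcomp Require Import boolp classical_sets reals.
Import Order.TTheory GRing.Theory Num.Theory.
Local Open Scope ring_scope.
Local Open Scope classical_set_scope.

Lemma linf_ge0 (R : realType) (n : nat) (x : 'I_n -> R) : 0 <= linf x.
Proof.
rewrite /linf; elim/big_ind: _ => //.
- by move=> u v hu hv; rewrite le_max hu.
Qed.

Lemma linf_ge (R : realType) (n : nat) (x : 'I_n -> R) i : `|x i| <= linf x.
Proof.
rewrite /linf (bigD1 i) //= le_max lexx //.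
Qed.

Lemma linfN (R : realType) (n : nat) (x : 'I_n -> R) :
  linf (fun i => - x i) = linf x.
Proof. by rewrite /linf; apply: eq_bigr => i _; rewrite normrN. Qed.

Theorem mainTheorem14 (R : realType) (n : nat) (hn : (0 < n)%N)
  (a b : 'I_n -> R) (delta : R) (hdelta : 0 <= delta) (pa : 'I_n -> R) :
  is_push (line b) a pa ->
  linf (fun i => pa i - b i) <= delta ->
  inf [set `|a i - b i| | i in [set: 'I_n]] <= delta /\
  (forall (k : 'I_n -> nat) (G : forall i : 'I_n, 'I_(k i) -> R),
     grid_image G a ->
     inf [set linf (fun i => b i - g i) | g in Grid G] <= delta).
Proof.
move=> [Lpa apa minpa] hlinf.
pose f := fun i => a i - b i.
case: (@arg_maxP _ R _ (Ordinal hn) xpredT f isT) => j0 _ hi0.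
have eq0 : pa j0 = a j0.
  apply/eqP; rewrite eq_le apa andbT.
  have := minpa (fun i => b i + f j0).
  have Lq : line b (fun i => b i + f j0) by exists (f j0).
  have aq : leV a (fun i => b i + f j0).
    move=> i; have := hi0 i isT; rewrite /f => h.
    by rewrite -lerBlDl.
  move=> /(_ Lq aq j0); rewrite /f; by rewrite addrC subrK.
have hle : `|a j0 - b j0| <= delta.
  apply: le_trans hlinf; rewrite -eq0; exact: (@linf_ge R n (fun i => pa i - b i) j0).
split.
  apply: le_trans hle.
  apply: ge_inf; last by exists j0.
  by exists 0 => _ [i _ <-].
move=> k G ga.
apply: le_trans hlinf.
apply: ge_inf.
  by exists 0 => _ [g _ <-]; exact: linf_ge0.
exists pa.
  have [j hj] := ga j0; exists j0, j; by rewrite eq0.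
rewrite -linfN; congr linf; apply: funext => i; by rewrite opprB.
Qed.
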